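(* Let $T\in L_{aut}(\mathcal B)$ be a shifted hyperbolic operator with transition subspace $E_0=E^-\cap T^{-1}(E^+)$. If $E_0$ is separable (in particular, if $E_0$ is finite dimensional), then $\overline{B(T)}$ is separable.
   Context: $\mathcal B$ is a Banach space. $T$ is generalized hyperbolic if there is a decomposition $\mathcal B=E^-\oplus E^+$ into complementary closed subspaces with $T(E^+)\subset E^+$, $T^{-1}(E^-)\subset E^-$, and $T|_{E^+}$, $T^{-1}|_{E^-}$ uniform contractions; $T$ is shifted hyperbolic if in addition $E_0=E^-\cap T^{-1}(E^+)\ne\{0\}$. $B(T)$ is the set of $x$ for which there exist $K>0$ and strictly increasing sequences of positive integers $(k_n),(m_n)$ with $|T^{k_n}x|<K$ and $|T^{-m_n}x|<K$. *)

(* Defs.v *)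
From Stdlib Require Import Reals.
Open Scope R_scope.

Record Banach := {
  car :> Type;
  vzero : car;
  vadd : car -> car -> car;
  vopp : car -> car;
  vscal : R -> car -> car;
  vnorm : car -> R;
  vadd_assoc : forall x y z, vadd x (vadd y z) = vadd (vadd x y) z;
  vadd_comm : forall x y, vadd x y = vadd y x;
  vadd_0 : forall x, vadd x vzero = x;
  vadd_opp : forall x, vadd x (vopp x) = vzero;
  vscal_1 : forall x, vscal 1 x = x;
  vscal_assoc : forall a b x, vscal a (vscal b x) = vscal (a * b) x;
  vscal_distr_l : forall a x y, vscal a (vadd x y) = vadd (vscal a x) (vscal a y);
  vscal_distr_r : forall a b x, vscal (a + b) x = vadd (vscal a x) (vscal b x);
  vnorm_nonneg : forall x, 0 <= vnorm x;
  vnorm_eq0 : forall x, vnorm x = 0 -> x = vzero;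
  vnorm_scal : forall a x, vnorm (vscal a x) = Rabs a * vnorm x;
  vnorm_triangle : forall x y, vnorm (vadd x y) <= vnorm x + vnorm y;
  vcomplete : forall u : nat -> car,
    (forall eps, 0 < eps -> exists N, forall m n, (N <= m)%nat -> (N <= n)%nat ->
        vnorm (vadd (u m) (vopp (u n))) < eps) ->
    exists l, forall eps, 0 < eps -> exists N, forall n, (N <= n)%nat ->
        vnorm (vadd (u n) (vopp l)) < eps
}.

Arguments vzero {_}.
Arguments vadd {_} _ _.
Arguments vopp {_} _.
Arguments vscal {_} _ _.
Arguments vnorm {_} _.

Section Defs.
Variable B : Banach.

Definition dist (x y : B) : R := vnorm (vadd x (vopp y)).

Definition bounded_linear (T : B -> B) : Prop :=
  (forall x y, T (vadd x y) = vadd (T x) (T y)) /\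
  (forall a x, T (vscal a x) = vscal a (T x)) /\
  (exists C, forall x, vnorm (T x) <= C * vnorm x).

Definition is_aut (T Tinv : B -> B) : Prop :=
  bounded_linear T /\ bounded_linear Tinv /\
  (forall x, T (Tinv x) = x) /\ (forall x, Tinv (T x) = x).

Definition converges_to (u : nat -> B) (l : B) : Prop :=
  forall eps, 0 < eps -> exists N, forall n, (N <= n)%nat -> dist (u n) l < eps.

Definition closed_subspace (E : B -> Prop) : Prop :=
  E vzero /\ (forall x y, E x -> E y -> E (vadd x y)) /\
  (forall a x, E x -> E (vscal a x)) /\
  (forall u l, (forall n, E (u n)) -> converges_to u l -> E l).

Definition complementary (E1 E2 : B -> Prop) : Prop :=
  (forall x, E1 x -> E2 x -> x = vzero) /\
  (forall x, exists a b, E1 a /\ E2 b /\ x = vadd a b).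

Definition iter (n : nat) (T : B -> B) (x : B) : B := Nat.iter n T x.

Definition uniform_contraction_on (S : B -> B) (E : B -> Prop) : Prop :=
  exists c t, 0 < c /\ 0 < t < 1 /\
    forall n x, E x -> vnorm (iter n S x) <= c * t ^ n * vnorm x.

Definition generalized_hyperbolic_dec (T Tinv : B -> B) (Em Ep : B -> Prop) : Prop :=
  closed_subspace Em /\ closed_subspace Ep /\ complementary Em Ep /\
  (forall x, Ep x -> Ep (T x)) /\ (forall x, Em x -> Em (Tinv x)) /\
  uniform_contraction_on T Ep /\ uniform_contraction_on Tinv Em.

Definition E0 (T : B -> B) (Em Ep : B -> Prop) (x : B) : Prop := Em x /\ Ep (T x).

Definition shifted_hyperbolic_dec (T Tinv : B -> B) (Em Ep : B -> Prop) : Prop :=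
  generalized_hyperbolic_dec T Tinv Em Ep /\ exists x, E0 T Em Ep x /\ x <> vzero.

Definition BT (T Tinv : B -> B) (x : B) : Prop :=
  exists (K : R) (k m : nat -> nat), 0 < K /\
    (forall n, (1 <= k n)%nat /\ (k n < k (S n))%nat) /\
    (forall n, (1 <= m n)%nat /\ (m n < m (S n))%nat) /\
    (forall n, vnorm (iter (k n) T x) < K) /\
    (forall n, vnorm (iter (m n) Tinv x) < K).

Definition closure (A : B -> Prop) (x : B) : Prop :=
  forall eps, 0 < eps -> exists y, A y /\ dist x y < eps.

(** A subset A is separable: it has a countable dense subset.  (Here A is
    nonempty in all uses, so a sequence suffices.) *)
Definition separable (A : B -> Prop) : Prop :=
  exists d : nat -> B, (forall n, A (d n)) /\
    forall x, A x -> forall eps, 0 < eps -> exists n, dist x (d n) < eps.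

End Defs.

(* Main.v *)
Require Import Defs.
From Stdlib Require Import Reals Lra Lia Cantor ClassicalEpsilon Classical.
Open Scope R_scope.

Arguments vadd_assoc {_}. Arguments vadd_comm {_}. Arguments vadd_0 {_}. Arguments vadd_opp {_}.
Arguments vscal_1 {_}. Arguments vscal_assoc {_}. Arguments vscal_distr_l {_}. Arguments vscal_distr_r {_}.
Arguments vnorm_nonneg {_}. Arguments vnorm_eq0 {_}. Arguments vnorm_scal {_}. Arguments vnorm_triangle {_}.
Arguments vcomplete {_}.

Lemma add0l {B : Banach} (x : B) : vadd vzero x = x.
Proof. rewrite vadd_comm; apply vadd_0. Qed.
Lemma addNl {B : Banach} (x : B) : vadd (vopp x) x = vzero.
Proof. rewrite vadd_comm; apply vadd_opp. Qed.
Lemma add_cancel {B : Banach} (x y z : B) : vadd x y = vadd x z -> y = z.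
Proof. intro H. rewrite <- (add0l y), <- (add0l z), <- (addNl x), <- !vadd_assoc, H. reflexivity. Qed.
Lemma scal0 {B : Banach} (x : B) : vscal 0 x = vzero.
Proof. apply (add_cancel (vscal 0 x)). rewrite <- vscal_distr_r, vadd_0. f_equal; ring. Qed.
Lemma scal0v {B : Banach} (a : R) : vscal a (@vzero B) = vzero.
Proof. rewrite <- (scal0 vzero), vscal_assoc. rewrite Rmult_0_r. reflexivity. Qed.
Lemma opp_scal {B : Banach} (x : B) : vopp x = vscal (-1) x.
Proof. apply (add_cancel x). rewrite vadd_opp. rewrite <- (vscal_1 x) at 1. rewrite <- vscal_distr_r.
  replace (1 + -1) with 0 by ring. now rewrite scal0. Qed.
Lemma norm0 {B : Banach} : vnorm (@vzero B) = 0.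
Proof. rewrite <- (scal0 vzero), vnorm_scal, Rabs_R0. ring. Qed.
Lemma norm_opp {B : Banach} (x : B) : vnorm (vopp x) = vnorm x.
Proof. rewrite opp_scal, vnorm_scal. replace (Rabs (-1)) with 1 by (unfold Rabs; destruct Rcase_abs; lra). ring. Qed.
Lemma opp_add {B : Banach} (x y : B) : vopp (vadd x y) = vadd (vopp x) (vopp y).
Proof. rewrite !opp_scal. apply vscal_distr_l. Qed.
Lemma oppK {B : Banach} (x : B) : vopp (vopp x) = x.
Proof. rewrite !opp_scal, vscal_assoc. replace (-1 * -1) with 1 by ring. apply vscal_1. Qed.
Lemma opp0 {B : Banach} : vopp (@vzero B) = vzero.
Proof. rewrite opp_scal. apply scal0v. Qed.
Lemma opp_scal2 {B : Banach} a (x : B) : vopp (vscal a x) = vscal (-a) x.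
Proof. rewrite opp_scal, vscal_assoc. f_equal; ring. Qed.
Lemma addAC {B : Banach} (x y z : B) : vadd (vadd x y) z = vadd (vadd x z) y.
Proof. rewrite <- !vadd_assoc, (vadd_comm y). reflexivity. Qed.
Lemma addCA {B : Banach} (x y z : B) : vadd x (vadd y z) = vadd y (vadd x z).
Proof. rewrite !vadd_assoc, (vadd_comm x). reflexivity. Qed.
Lemma addKr {B : Banach} (x y : B) : vadd (vadd x y) (vopp y) = x.
Proof. rewrite <- vadd_assoc, vadd_opp, vadd_0. reflexivity. Qed.
Lemma addNKr {B : Banach} (x y : B) : vadd (vadd x (vopp y)) y = x.
Proof. rewrite <- vadd_assoc, addNl, vadd_0. reflexivity. Qed.
Lemma sub_eq {B : Banach} (x y : B) : vadd x (vopp y) = vzero -> x = y.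
Proof. intro H. rewrite <- (addNKr x y), H, add0l. reflexivity. Qed.
Lemma norm_sub_sym {B : Banach} (x y : B) : vnorm (vadd x (vopp y)) = vnorm (vadd y (vopp x)).
Proof. rewrite <- norm_opp, opp_add, oppK, vadd_comm. reflexivity. Qed.
Lemma dist_sym {B : Banach} (x y : B) : Defs.dist B x y = Defs.dist B y x.
Proof. apply norm_sub_sym. Qed.
Lemma sub_chain {B : Banach} (x y z : B) : vadd (vadd x (vopp y)) (vadd y (vopp z)) = vadd x (vopp z).
Proof. rewrite vadd_assoc, addNKr. reflexivity. Qed.
Lemma dist_tri {B : Banach} (x y z : B) : Defs.dist B x z <= Defs.dist B x y + Defs.dist B y z.
Proof. unfold Defs.dist. rewrite <- (sub_chain x y z). apply vnorm_triangle. Qed.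
Lemma dist_self {B : Banach} (x : B) : Defs.dist B x x = 0.
Proof. unfold Defs.dist. rewrite vadd_opp. apply norm0. Qed.
Lemma norm_tri_sub {B : Banach} (x y : B) : vnorm (vadd x (vopp y)) <= vnorm x + vnorm y.
Proof. rewrite <- (norm_opp y). apply vnorm_triangle. Qed.
Lemma norm_rev {B : Banach} (x y : B) : vnorm x <= vnorm y + vnorm (vadd x (vopp y)).
Proof. rewrite <- (addNKr x y) at 1. rewrite vadd_comm. apply vnorm_triangle. Qed.
Lemma dist_norm {B : Banach} (x : B) : Defs.dist B x vzero = vnorm x.
Proof. unfold Defs.dist. rewrite opp0, vadd_0. reflexivity. Qed.
Lemma sub_add2 {B : Banach} (a b c d : B) :
  vadd (vadd a b) (vopp (vadd c d)) = vadd (vadd a (vopp c)) (vadd b (vopp d)).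
Proof. rewrite opp_add. rewrite <- !vadd_assoc. f_equal. rewrite !vadd_assoc. f_equal. apply vadd_comm. Qed.

Lemma lin0 {B : Banach} (T : B -> B) : bounded_linear B T -> T vzero = vzero.
Proof. intros [_ [Hs _]]. rewrite <- (scal0 vzero), Hs, !scal0. reflexivity. Qed.
Lemma lin_opp {B : Banach} (T : B -> B) x : bounded_linear B T -> T (vopp x) = vopp (T x).
Proof. intros [_ [Hs _]]. rewrite !opp_scal. apply Hs. Qed.
Lemma lin_add {B : Banach} (T : B -> B) x y : bounded_linear B T -> T (vadd x y) = vadd (T x) (T y).
Proof. intros [H _]. apply H. Qed.
Lemma lin_sub {B : Banach} (T : B -> B) x y : bounded_linear B T ->
  T (vadd x (vopp y)) = vadd (T x) (vopp (T y)).
Proof. intro H. rewrite lin_add, lin_opp; auto. Qed.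
Lemma lin_bound {B : Banach} (T : B -> B) : bounded_linear B T ->
  exists C, 0 < C /\ forall x, vnorm (T x) <= C * vnorm x.
Proof. intros [_ [_ [C HC]]]. exists (Rmax C 1). split. apply Rlt_le_trans with 1; [lra|apply Rmax_r].
  intro x. eapply Rle_trans. apply HC. apply Rmult_le_compat_r. apply vnorm_nonneg. apply Rmax_l. Qed.
Lemma lin_lip {B : Banach} (T : B -> B) : bounded_linear B T ->
  exists C, 0 < C /\ forall x y, Defs.dist B (T x) (T y) <= C * Defs.dist B x y.
Proof. intro H. destruct (lin_bound T H) as [C [HC H']]. exists C. split; auto.
  intros x y. unfold Defs.dist. rewrite <- lin_sub; auto. Qed.

Lemma iterS {B : Banach} n (T : B -> B) x : iter B (S n) T x = T (iter B n T x).
Proof. reflexivity. Qed.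
Lemma iterS_r {B : Banach} n (T : B -> B) x : iter B (S n) T x = iter B n T (T x).
Proof. unfold iter. apply Nat.iter_succ_r. Qed.
Lemma iter_add {B : Banach} a b (T : B -> B) x : iter B (a + b) T x = iter B a T (iter B b T x).
Proof. unfold iter. apply Nat.iter_add. Qed.

Lemma iter_lin {B : Banach} n (T : B -> B) : bounded_linear B T -> bounded_linear B (iter B n T).
Proof. intro H. induction n.
  - split; [|split]; [reflexivity|reflexivity|]. exists 1. intro; simpl; lra.
  - destruct IHn as [Ha [Hs Hb]]. split; [|split].
    + intros x y. rewrite !iterS, Ha. apply lin_add; auto.
    + intros a x. rewrite !iterS, Hs. destruct H as [_ [H _]]. apply H.
    + destruct Hb as [C HC]. destruct (lin_bound T H) as [D [HD HD']].
      exists (D * Rmax C 0). intro x. rewrite iterS. eapply Rle_trans. apply HD'.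
      rewrite Rmult_assoc. apply Rmult_le_compat_l. lra. eapply Rle_trans. apply HC.
      apply Rmult_le_compat_r. apply vnorm_nonneg. apply Rmax_l.
Qed.

Lemma iter_inv1 {B : Banach} n (T Tinv : B -> B) x : is_aut B T Tinv -> iter B n T (iter B n Tinv x) = x.
Proof. intros [_ [_ [H1 H2]]]. revert x; induction n; intro x. reflexivity.
  rewrite iterS_r, iterS, H1. apply IHn. Qed.
Lemma iter_inv2 {B : Banach} n (T Tinv : B -> B) x : is_aut B T Tinv -> iter B n Tinv (iter B n T x) = x.
Proof. intros [_ [_ [H1 H2]]]. revert x; induction n; intro x. reflexivity.
  rewrite iterS_r, iterS, H2. apply IHn. Qed.

Lemma sub_opp {B : Banach} (E : B -> Prop) x : closed_subspace B E -> E x -> E (vopp x).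
Proof. intros [_ [_ [H _]]] Hx. rewrite opp_scal. auto. Qed.
Lemma sub_add {B : Banach} (E : B -> Prop) x y : closed_subspace B E -> E x -> E y -> E (vadd x y).
Proof. intros [_ [H _]]. auto. Qed.
Lemma sub_sub {B : Banach} (E : B -> Prop) x y : closed_subspace B E -> E x -> E y -> E (vadd x (vopp y)).
Proof. intros H Hx Hy. apply sub_add; auto. apply sub_opp; auto. Qed.
Lemma sub_zero {B : Banach} (E : B -> Prop) : closed_subspace B E -> E vzero.
Proof. intros [H _]. auto. Qed.
Lemma iter_inv_sub {B : Banach} n (T : B -> B) (E : B -> Prop) x :
  (forall y, E y -> E (T y)) -> E x -> E (iter B n T x).
Proof. intros H Hx. induction n. exact Hx. rewrite iterS. auto. Qed.

Lemma lim_unique {B : Banach} (u : nat -> B) l l' : converges_to B u l -> converges_to B u l' -> l = l'.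
Proof. intros H1 H2. apply sub_eq. apply vnorm_eq0.
  destruct (Rle_lt_or_eq_dec 0 (vnorm (vadd l (vopp l')))) as [Hp|Hp]; [apply vnorm_nonneg| |auto].
  set (e := vnorm (vadd l (vopp l'))) in *.
  destruct (H1 (e/2)) as [N1 HN1]; [lra|]. destruct (H2 (e/2)) as [N2 HN2]; [lra|].
  specialize (HN1 (N1+N2)%nat ltac:(lia)). specialize (HN2 (N1+N2)%nat ltac:(lia)).
  pose proof (dist_tri l (u (N1+N2)%nat) l'). rewrite (dist_sym l (u _)) in H. unfold Defs.dist in *. fold e in H. lra. Qed.

Lemma lim_add {B : Banach} (u v : nat -> B) l m : converges_to B u l -> converges_to B v m ->
  converges_to B (fun n => vadd (u n) (v n)) (vadd l m).
Proof. intros H1 H2 eps He. destruct (H1 (eps/2)) as [N1 HN1]; [lra|]. destruct (H2 (eps/2)) as [N2 HN2]; [lra|].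
  exists (N1+N2)%nat. intros n Hn. specialize (HN1 n ltac:(lia)). specialize (HN2 n ltac:(lia)).
  unfold Defs.dist in *. rewrite sub_add2. eapply Rle_lt_trans. apply vnorm_triangle. lra. Qed.

Lemma lim_norm_le {B : Banach} (u : nat -> B) l M : converges_to B u l -> (forall n, vnorm (u n) <= M) -> vnorm l <= M.
Proof. intros H1 H2. apply Rnot_lt_le. intro Hc. destruct (H1 (vnorm l - M)) as [N HN]; [lra|].
  specialize (HN N (le_n _)). specialize (H2 N). pose proof (norm_rev l (u N)).
  unfold Defs.dist in HN. rewrite norm_sub_sym in HN. lra. Qed.

Lemma lim_ext {B : Banach} (u v : nat -> B) l : (forall n, u n = v n) -> converges_to B u l -> converges_to B v l.
Proof. intros He H eps Hp. destruct (H eps Hp) as [N HN]. exists N. intros n Hn. rewrite <- He. auto. Qed.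

Lemma half_pow_small (d : R) : 0 < d -> exists N, forall n, (N <= n)%nat -> (1/2)^n < d.
Proof. intro Hd. destruct (pow_lt_1_zero (1/2) ltac:(rewrite Rabs_pos_eq; lra) d Hd) as [N HN].
  exists N. intros n Hn. specialize (HN n Hn). rewrite Rabs_pos_eq in HN; auto. apply pow_le; lra. Qed.

Lemma half_pow_pos n : 0 < (1/2)^n.
Proof. apply pow_lt; lra. Qed.
Lemma half_pow_S n : (1/2)^(S n) = (1/2)^n / 2.
Proof. simpl. lra. Qed.
Lemma half_pow_le1 n : (1/2)^n <= 1.
Proof. induction n. simpl; lra. rewrite half_pow_S. pose proof (half_pow_pos n). lra. Qed.
Lemma half_pow_mono n m : (n <= m)%nat -> (1/2)^m <= (1/2)^n.
Proof. intro H. induction H. lra. rewrite half_pow_S. pose proof (half_pow_pos m). lra. Qed.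

Lemma baire {B : Banach} (F : nat -> B -> Prop) :
  (forall n x, (forall eps, 0 < eps -> exists y, F n y /\ Defs.dist B x y < eps) -> F n x) ->
  (forall x, exists n, F n x) ->
  exists n y r, 0 < r /\ forall z, Defs.dist B z y < r -> F n z.
Proof.
  intros Hcl Hcov. apply NNPP. intro Hn.
  assert (H : forall n y r, 0 < r -> exists z, Defs.dist B z y < r /\ ~ F n z).
  { intros n y r Hr. apply NNPP. intro Hc. apply Hn. exists n, y, r. split; auto.
    intros z Hz. apply NNPP. intro Hz'. apply Hc. exists z. auto. }
  assert (Hstep : forall n (p : B * R), exists q : B * R,
     0 < snd p -> 0 < snd q /\ snd q <= snd p / 2 /\
     (forall w, Defs.dist B w (fst q) < 2 * snd q -> Defs.dist B w (fst p) < snd p /\ ~ F n w)).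
  { intros n [y r]. simpl. destruct (Rlt_dec 0 r) as [Hr|Hr].
    2:{ exists (y, r). intro; contradiction. }
    destruct (H n y r Hr) as [z [Hz Hnz]].
    assert (Hex : exists eps, 0 < eps /\ forall w, F n w -> eps <= Defs.dist B z w).
    { apply NNPP. intro Hc. apply Hnz. apply Hcl. intros eps He. apply NNPP. intro Hc2.
      apply Hc. exists eps. split; auto. intros w Hw. apply Rnot_lt_le. intro Hl. apply Hc2. exists w. auto. }
    destruct Hex as [eps [He Hew]].
    exists (z, Rmin (eps/2) ((r - Defs.dist B z y)/2)). intros _. simpl.
    split; [apply Rmin_pos; lra|]. split. { eapply Rle_trans. apply Rmin_r. pose proof (dist_sym z z). unfold Defs.dist in *. pose proof (vnorm_nonneg (vadd z (vopp y))). lra. }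
    intros w Hw. pose proof (Rmin_l (eps/2) ((r - Defs.dist B z y)/2)). pose proof (Rmin_r (eps/2) ((r - Defs.dist B z y)/2)).
    split. pose proof (dist_tri w z y). lra.
    intro Hfw. specialize (Hew w Hfw). rewrite dist_sym in Hew. lra. }
  assert (Hf : exists f : nat -> B * R -> B * R, forall n p, 0 < snd p -> 0 < snd (f n p) /\ snd (f n p) <= snd p / 2 /\
     (forall w, Defs.dist B w (fst (f n p)) < 2 * snd (f n p) -> Defs.dist B w (fst p) < snd p /\ ~ F n w)).
  { exists (fun n p => proj1_sig (constructive_indefinite_description _ (Hstep n p))).
    intros n p. exact (proj2_sig (constructive_indefinite_description _ (Hstep n p))). }
  destruct Hf as [f Hf].
  set (s := fix s k := match k with O => (@vzero B, 1) | S k => f k (s k) end).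
  assert (Hpos : forall k, 0 < snd (s k) /\ snd (s k) <= (1/2)^k).
  { induction k. simpl. lra. destruct IHk as [H1 H2]. destruct (Hf k (s k) H1) as [H3 [H4 _]].
    change (s (S k)) with (f k (s k)). rewrite half_pow_S. lra. }
  assert (Hnest : forall j k, (k <= j)%nat -> forall w, Defs.dist B w (fst (s j)) < snd (s j) -> Defs.dist B w (fst (s k)) < snd (s k)).
  { intros j k Hkj. induction Hkj. auto. intros w Hw. apply IHHkj.
    destruct (Hf m (s m) (proj1 (Hpos m))) as [H1 [_ H3]]. apply H3. change (s (S m)) with (f m (s m)) in Hw. lra. }
  destruct (vcomplete (fun k => fst (s k))) as [l Hl].
  { intros eps He. destruct (half_pow_small (eps/2)) as [N HN]; [lra|]. exists N. intros m n Hm Hn0.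
    assert (Hm' : Defs.dist B (fst (s m)) (fst (s N)) < snd (s N)) by (apply (Hnest m N Hm); rewrite dist_self; apply Hpos).
    assert (Hn' : Defs.dist B (fst (s n)) (fst (s N)) < snd (s N)) by (apply (Hnest n N Hn0); rewrite dist_self; apply Hpos).
    pose proof (dist_tri (fst (s m)) (fst (s N)) (fst (s n))). rewrite (dist_sym (fst (s N))) in H0.
    specialize (HN N (le_n _)). pose proof (Hpos N). unfold Defs.dist in *. lra. }
  destruct (Hcov l) as [k Hk].
  destruct (Hf k (s k) (proj1 (Hpos k))) as [H1 [_ H3]].
  destruct (Hl (snd (s (S k)))) as [N HN]. apply Hpos.
  specialize (HN (N + S k)%nat ltac:(lia)).
  assert (Hd : Defs.dist B (fst (s (N + S k)%nat)) (fst (s (S k))) < snd (s (S k))).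
  { apply (Hnest (N + S k)%nat). lia. rewrite dist_self. apply Hpos. }
  cbv beta in HN. pose proof (dist_tri l (fst (s (N + S k)%nat)) (fst (s (S k)))).
  rewrite (dist_sym l (fst (s (N + S k)%nat))) in H0.
  change (Defs.dist B (fst (s (N + S k)%nat)) l < snd (s (S k))) in HN.
  assert (Defs.dist B l (fst (f k (s k))) < 2 * snd (f k (s k))).
  { change (f k (s k)) with (s (S k)). lra. }
  apply (proj2 (H3 l H2)). exact Hk.
Qed.

Fixpoint psum {B : Banach} (u : nat -> B) (n : nat) : B :=
  match n with O => vzero | S n => vadd (psum u n) (u n) end.

Lemma psum_cauchy {B : Banach} (u : nat -> B) K : (forall i, vnorm (u i) <= K * (1/2)^i) ->
  forall j n, vnorm (vadd (psum u (n + j)) (vopp (psum u n))) <= 2 * K * (1/2)^n * (1 - (1/2)^j).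
Proof. intros Hu j n. induction j.
  - rewrite Nat.add_0_r, vadd_opp, norm0. simpl. lra.
  - rewrite Nat.add_succ_r. simpl psum. rewrite addAC. eapply Rle_trans. apply vnorm_triangle.
    specialize (Hu (n+j)%nat). rewrite pow_add in Hu. simpl ((1/2)^(S j)). lra. Qed.

Lemma psum_sub {B : Banach} (E : B -> Prop) (u : nat -> B) : closed_subspace B E -> (forall i, E (u i)) -> forall n, E (psum u n).
Proof. intros HE Hu n. induction n; simpl. apply sub_zero; auto. apply sub_add; auto. Qed.

Lemma series_lim {B : Banach} (u : nat -> B) K : 0 <= K -> (forall i, vnorm (u i) <= K * (1/2)^i) ->
  exists L, converges_to B (psum u) L /\ vnorm L <= 2 * K.
Proof. intros HK Hu. pose proof (psum_cauchy u K Hu) as Hc.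
  destruct (vcomplete (psum u)) as [L HL].
  - intros eps He. destruct (half_pow_small (eps / (4 * K + 1))) as [N HN].
    { apply Rdiv_lt_0_compat; lra. }
    exists N. intros m n Hm Hn.
    destruct (Nat.le_exists_sub N m Hm) as [pm [-> _]]. destruct (Nat.le_exists_sub N n Hn) as [pn [-> _]].
    specialize (HN N (le_n _)). pose proof (Hc pm N) as H1. pose proof (Hc pn N) as H2.

    pose proof (sub_chain (psum u (N + pm)) (psum u N) (psum u (N + pn))) as Hid.
    rewrite (norm_sub_sym (psum u (N + pn)) (psum u N)) in H2.
    pose proof (vnorm_triangle (vadd (psum u (N + pm)) (vopp (psum u N))) (vadd (psum u N) (vopp (psum u (N + pn))))).
    rewrite Hid in H.
    rewrite (Nat.add_comm pm N), (Nat.add_comm pn N). pose proof (half_pow_pos pm). pose proof (half_pow_pos pn). pose proof (half_pow_pos N).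
    assert (HKN : K * (1/2)^N <= K * (eps / (4 * K + 1))) by (apply Rmult_le_compat_l; lra).
    assert (K * (eps / (4 * K + 1)) * 4 < eps).
    { apply Rmult_lt_reg_r with (4 * K + 1). lra. field_simplify; lra. }
    assert (2 * K * (1 / 2) ^ N * (1 - (1 / 2) ^ pm) <= 2 * K * (1/2)^N) by (pose proof (Rmult_le_pos K ((1/2)^N) HK ltac:(lra)); nra).
    assert (2 * K * (1 / 2) ^ N * (1 - (1 / 2) ^ pn) <= 2 * K * (1/2)^N) by (pose proof (Rmult_le_pos K ((1/2)^N) HK ltac:(lra)); nra).
    lra.
  - exists L. split. exact HL. apply lim_norm_le with (psum u). exact HL.
    intro n. pose proof (Hc n 0%nat). simpl in H. rewrite opp0, vadd_0 in H.
    pose proof (half_pow_pos n). nra. Qed.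

Lemma scal_opp {B : Banach} c (w : B) : vscal c (vopp w) = vopp (vscal c w).
Proof. rewrite !opp_scal, !vscal_assoc. f_equal. ring. Qed.
Lemma add4 {B : Banach} (a b c d : B) : vadd (vadd a b) (vadd c d) = vadd (vadd a c) (vadd b d).
Proof. rewrite <- !vadd_assoc. f_equal. apply addCA. Qed.
Lemma dec_eq {B : Banach} (a b c d : B) : vadd a b = vadd c d -> vadd b (vopp d) = vadd c (vopp a).
Proof. intro H. apply (add_cancel a). rewrite vadd_assoc, H, addKr. rewrite addCA, vadd_opp, vadd_0. reflexivity. Qed.

Lemma compl_unique {B : Banach} (E1 E2 : B -> Prop) a b c d :
  closed_subspace B E1 -> closed_subspace B E2 -> Defs.complementary B E1 E2 ->
  E1 a -> E2 b -> E1 c -> E2 d -> vadd a b = vadd c d -> b = d.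
Proof. intros H1 H2 [Hc _] Ha Hb Hc' Hd He. apply sub_eq. apply Hc.
  rewrite (dec_eq _ _ _ _ He). apply sub_sub; auto. apply sub_sub; auto. Qed.

Lemma proj_bound {B : Banach} (E1 E2 : B -> Prop) :
  closed_subspace B E1 -> closed_subspace B E2 -> Defs.complementary B E1 E2 ->
  exists C, 0 < C /\ forall a b, E1 a -> E2 b -> vnorm b <= C * vnorm (vadd a b).
Proof.
  intros HE1 HE2 Hcomp.
  set (Sn := fun (n : nat) (z : B) => exists a b, E1 a /\ E2 b /\ vnorm a <= INR n /\ vnorm b <= INR n /\ z = vadd a b).
  destruct (baire (fun n => Defs.closure B (Sn n))) as [n [y [r [Hr Hball]]]].
  { intros n x Hx eps He. destruct (Hx (eps/2)) as [y [Hy Hxy]]; [lra|].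
    destruct (Hy (eps/2)) as [y' [Hy' Hyy]]; [lra|]. exists y'. split; auto.
    pose proof (dist_tri x y y'). lra. }
  { intro x. destruct (proj2 Hcomp x) as [a [b [Ha [Hb ->]]]].
    destruct (INR_unbounded (Rmax (vnorm a) (vnorm b))) as [n Hn]. exists n.
    intros eps He. exists (vadd a b). split. exists a, b. repeat split; auto.
    pose proof (Rmax_l (vnorm a) (vnorm b)); lra. pose proof (Rmax_r (vnorm a) (vnorm b)); lra.
    rewrite dist_self. auto. }
  assert (Claim1 : forall z, vnorm z < r -> forall eps, 0 < eps -> exists a b, E1 a /\ E2 b /\
     vnorm a <= 2 * INR n /\ vnorm b <= 2 * INR n /\ Defs.dist B z (vadd a b) < eps).
  { intros z Hz eps He.
    assert (Hyz : Defs.closure B (Sn n) (vadd y z)).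
    { apply Hball. unfold Defs.dist. rewrite (vadd_comm y z), addKr. auto. }
    assert (Hy : Defs.closure B (Sn n) y). { apply Hball. rewrite dist_self. auto. }
    destruct (Hyz (eps/2)) as [s1 [[a1 [b1 [Ha1 [Hb1 [Na1 [Nb1 ->]]]]]] D1]]; [lra|].
    destruct (Hy (eps/2)) as [s2 [[a2 [b2 [Ha2 [Hb2 [Na2 [Nb2 ->]]]]]] D2]]; [lra|].
    exists (vadd a1 (vopp a2)), (vadd b1 (vopp b2)).
    split. apply sub_sub; auto. split. apply sub_sub; auto.
    split. pose proof (norm_tri_sub a1 a2); lra. split. pose proof (norm_tri_sub b1 b2); lra.
    rewrite <- sub_add2. unfold Defs.dist in *.
    set (s1 := vadd a1 b1) in *. set (s2 := vadd a2 b2) in *.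
    assert (Hid : vadd z (vopp (vadd s1 (vopp s2))) = vadd (vadd (vadd y z) (vopp s1)) (vopp (vadd y (vopp s2)))).
    { rewrite sub_add2. rewrite (vadd_comm y z), addKr. rewrite opp_add. reflexivity. }
    rewrite Hid. pose proof (norm_tri_sub (vadd (vadd y z) (vopp s1)) (vadd y (vopp s2))). lra. }
  set (M := 4 * INR n / r).
  assert (HM : 0 <= M). { unfold M. pose proof (pos_INR n). apply Rmult_le_pos. lra. left. apply Rinv_0_lt_compat. lra. }
  assert (Claim2 : forall z eps, 0 < eps -> exists a b, E1 a /\ E2 b /\
     vnorm a <= M * vnorm z /\ vnorm b <= M * vnorm z /\ Defs.dist B z (vadd a b) < eps).
  { intros z eps He. destruct (Rle_lt_or_eq_dec 0 (vnorm z) (vnorm_nonneg z)) as [Hz|Hz].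
    2:{ exists vzero, vzero. rewrite <- Hz, (vnorm_eq0 z (eq_sym Hz)), norm0, vadd_0, dist_self.
        repeat split; try apply sub_zero; auto; lra. }
    set (lam := r / (2 * vnorm z)).
    assert (Hlam : 0 < lam). { unfold lam. apply Rdiv_lt_0_compat; lra. }
    destruct (Claim1 (vscal lam z)) with (eps := lam * eps) as [a [b [Ha [Hb [Na [Nb Hd]]]]]].
    { rewrite vnorm_scal, Rabs_pos_eq by lra. unfold lam. field_simplify; lra. }
    { nra. }
    exists (vscal (/lam) a), (vscal (/lam) b).
    destruct HE1 as [_ [_ [HS1 _]]]. destruct HE2 as [_ [_ [HS2 _]]].
    assert (Hil : 0 < / lam) by (apply Rinv_0_lt_compat; lra).
    assert (Heq : / lam * (2 * INR n) = M * vnorm z). { unfold M, lam. field. lra. }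
    split; auto. split; auto.
    split. rewrite vnorm_scal, Rabs_pos_eq by lra. rewrite <- Heq. apply Rmult_le_compat_l; lra.
    split. rewrite vnorm_scal, Rabs_pos_eq by lra. rewrite <- Heq. apply Rmult_le_compat_l; lra.
    assert (Hid : vadd z (vopp (vadd (vscal (/lam) a) (vscal (/lam) b))) = vscal (/lam) (vadd (vscal lam z) (vopp (vadd a b)))).
    { rewrite vscal_distr_l, vscal_assoc, scal_opp, vscal_distr_l. rewrite Rinv_l by lra. rewrite vscal_1. reflexivity. }
    unfold Defs.dist in *. rewrite Hid, vnorm_scal, Rabs_pos_eq by lra.
    apply Rmult_lt_reg_l with lam. lra. rewrite <- Rmult_assoc, Rinv_r, Rmult_1_l by lra. exact Hd. }
  assert (Claim3 : forall z, 0 < vnorm z -> exists A Bb, E1 A /\ E2 Bb /\ z = vadd A Bb /\ vnorm Bb <= 2 * (M * vnorm z)).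
  { intros z Hz. set (nz := vnorm z).
    assert (Hch : forall (k : nat) (w : B), exists p : B * B, E1 (fst p) /\ E2 (snd p) /\ vnorm (fst p) <= M * vnorm w /\
       vnorm (snd p) <= M * vnorm w /\ Defs.dist B w (vadd (fst p) (snd p)) < nz * (1/2)^(S k)).
    { intros k w. assert (Hp : 0 < nz * (1/2)^(S k)).
      { pose proof (half_pow_pos (S k)). apply Rmult_lt_0_compat; unfold nz in *; lra. }
      destruct (Claim2 w (nz * (1/2)^(S k)) Hp) as [a [b H]]. exists (a, b). exact H. }
    assert (Hf : exists f : nat -> B -> B * B, forall k w, E1 (fst (f k w)) /\ E2 (snd (f k w)) /\ vnorm (fst (f k w)) <= M * vnorm w /\
       vnorm (snd (f k w)) <= M * vnorm w /\ Defs.dist B w (vadd (fst (f k w)) (snd (f k w))) < nz * (1/2)^(S k)).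
    { exists (fun k w => proj1_sig (constructive_indefinite_description _ (Hch k w))).
      intros k w. exact (proj2_sig (constructive_indefinite_description _ (Hch k w))). }
    destruct Hf as [f Hf].
    set (zs := fix zs k := match k with O => z | S k => vadd (zs k) (vopp (vadd (fst (f k (zs k))) (snd (f k (zs k))))) end).
    assert (Hzs : forall k, vnorm (zs k) <= nz * (1/2)^k).
    { intro k. destruct k. simpl. unfold nz in *. lra. destruct (Hf k (zs k)) as [_ [_ [_ [_ Hd]]]]. left. exact Hd. }
    set (ua := fun k => fst (f k (zs k))). set (ub := fun k => snd (f k (zs k))).
    assert (Hua : forall i, vnorm (ua i) <= (M * nz) * (1/2)^i).
    { intro i. destruct (Hf i (zs i)) as [_ [_ [H _]]]. unfold ua. specialize (Hzs i).
      eapply Rle_trans. apply H. rewrite Rmult_assoc. apply Rmult_le_compat_l; auto. }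
    assert (Hub : forall i, vnorm (ub i) <= (M * nz) * (1/2)^i).
    { intro i. destruct (Hf i (zs i)) as [_ [_ [_ [H _]]]]. unfold ub. specialize (Hzs i).
      eapply Rle_trans. apply H. rewrite Rmult_assoc. apply Rmult_le_compat_l; auto. }
    assert (HMz : 0 <= M * nz) by (apply Rmult_le_pos; unfold nz in *; lra).
    destruct (series_lim ua (M * nz) HMz Hua) as [A [HA _]].
    destruct (series_lim ub (M * nz) HMz Hub) as [Bb [HB NB]].
    exists A, Bb.
    split. apply (proj2 (proj2 (proj2 HE1)) (psum ua)); auto. apply psum_sub; auto. intro i; apply Hf.
    split. apply (proj2 (proj2 (proj2 HE2)) (psum ub)); auto. apply psum_sub; auto. intro i; apply Hf.
    split; [|lra].
    assert (Hps : forall k, vadd (psum ua k) (psum ub k) = vadd z (vopp (zs k))).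
    { induction k. simpl. rewrite vadd_0, vadd_opp. reflexivity.
      simpl psum. rewrite add4, IHk. change (zs (S k)) with (vadd (zs k) (vopp (vadd (ua k) (ub k)))).
      rewrite opp_add, oppK. apply eq_sym, vadd_assoc. }
    apply (lim_unique (fun k => vadd (psum ua k) (psum ub k))).
    - intros eps He. destruct (half_pow_small (eps / (nz + 1))) as [N HN]. apply Rdiv_lt_0_compat; unfold nz in *; lra.
      exists N. intros k Hk. rewrite Hps. unfold Defs.dist. rewrite addAC, vadd_opp, add0l, norm_opp.
      specialize (HN k Hk). specialize (Hzs k). pose proof (half_pow_pos k).
      assert (nz * (1/2)^k <= nz * (eps / (nz + 1))) by (apply Rmult_le_compat_l; unfold nz in *; lra).
      assert (nz * (eps / (nz + 1)) < eps). { apply Rmult_lt_reg_r with (nz + 1). unfold nz in *; lra. field_simplify; unfold nz in *; lra. }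
      lra.
    - apply lim_add; auto. }
  exists (2 * M + 1). split. lra. intros a b Ha Hb.
  destruct (Rle_lt_or_eq_dec 0 (vnorm (vadd a b)) (vnorm_nonneg _)) as [Hz|Hz].
  - destruct (Claim3 (vadd a b) Hz) as [A [Bb [HA [HB [Heq NB]]]]].
    pose proof (compl_unique E1 E2 a b A Bb HE1 HE2 Hcomp Ha Hb HA HB Heq) as Ebb. subst Bb. nra.
  - assert (b = vzero).
    { apply (compl_unique E1 E2 a b vzero vzero HE1 HE2 Hcomp Ha Hb (sub_zero E1 HE1) (sub_zero E2 HE2)).
      rewrite vadd_0. apply (vnorm_eq0 _ (eq_sym Hz)). }
    rewrite H, norm0, vadd_0. pose proof (vnorm_nonneg a). nra.
Qed.

Lemma sum_sub {B : Banach} (p q r : B) : p = vadd q r -> vadd p (vopp q) = r.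
Proof. intros ->. rewrite (vadd_comm q r). apply addKr. Qed.
Lemma sum_sub2 {B : Banach} (p q r : B) : p = vadd q r -> vadd p (vopp r) = q.
Proof. intros ->. apply addKr. Qed.

Lemma norm_first {B : Banach} (a b : B) : vnorm a <= vnorm (vadd a b) + vnorm b.
Proof. pose proof (norm_tri_sub (vadd a b) b). rewrite addKr in H. exact H. Qed.

Lemma incr_ge (s : nat -> nat) : (forall n, (s n < s (S n))%nat) -> forall n, (n <= s n)%nat.
Proof. intros H n. induction n. lia. specialize (H n). lia. Qed.

Lemma contr_small (c t K eps : R) : 0 < c -> 0 < t < 1 -> 0 <= K -> 0 < eps ->
  exists N, forall n, (N <= n)%nat -> c * t ^ n * K < eps.
Proof. intros Hc Ht HK He. destruct (pow_lt_1_zero t ltac:(rewrite Rabs_pos_eq; lra) (eps / (c * K + 1))) as [N HN].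
  apply Rdiv_lt_0_compat. lra. pose proof (Rmult_le_pos c K ltac:(lra) HK). lra.
  exists N. intros n Hn. specialize (HN n Hn). rewrite Rabs_pos_eq in HN by (apply pow_le; lra).
  pose proof (Rmult_le_pos c K ltac:(lra) HK).
  assert (c * K * t^n <= c * K * (eps / (c * K + 1))) by (apply Rmult_le_compat_l; lra).
  assert (c * K * (eps / (c * K + 1)) < eps). { apply Rmult_lt_reg_r with (c * K + 1). lra. field_simplify; lra. }
  lra. Qed.

Definition Wset {B : Banach} (T Tinv : B -> B) (Em Ep : B -> Prop) (n : nat) (x : B) : Prop :=
  Em (iter B n Tinv x) /\ Ep (iter B n T x).

Lemma bt_approx {B : Banach} (T Tinv : B -> B) (Em Ep : B -> Prop) :
  is_aut B T Tinv -> generalized_hyperbolic_dec B T Tinv Em Ep ->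
  forall x, BT B T Tinv x -> forall eps, 0 < eps -> exists n w, Wset T Tinv Em Ep n w /\ Defs.dist B x w < eps.
Proof.
  intros Haut [HEm [HEp [Hcomp [HTp [HTm [[c1 [t1 [Hc1 [Ht1 Hcon1]]]] [c2 [t2 [Hc2 [Ht2 Hcon2]]]]]]]]]].
  intros x [K [k [m [HK [Hk [Hm [HkK HmK]]]]]]] eps He.
  destruct (proj_bound Em Ep HEm HEp Hcomp) as [C [HC Hproj]].
  assert (HlT : forall j, bounded_linear B (iter B j T)) by (intro j; apply iter_lin; apply Haut).
  assert (HlTi : forall j, bounded_linear B (iter B j Tinv)) by (intro j; apply iter_lin; apply Haut).
  set (K2 := K + c1 * (C * K)).
  assert (HK2 : 0 <= K2). { unfold K2. pose proof (Rmult_le_pos C K ltac:(lra) ltac:(lra)). pose proof (Rmult_le_pos c1 (C*K) ltac:(lra) H). lra. }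
  destruct (contr_small c1 t1 (C * K) (eps/2)) as [N1 HN1]; auto. apply Rmult_le_pos; lra. lra.
  destruct (contr_small c2 t2 ((C + 1) * K2) (eps/2)) as [N2 HN2]; auto. apply Rmult_le_pos; lra. lra.
  set (mm := m N1). set (kk := k N2).
  assert (Hmm : (N1 <= mm)%nat) by (apply incr_ge; intro; apply Hm).
  assert (Hkk : (N2 <= kk)%nat) by (apply incr_ge; intro; apply Hk).
  set (y := iter B mm Tinv x).
  destruct (proj2 Hcomp y) as [a' [b' [Ha' [Hb' Hy]]]].
  assert (Hb'n : vnorm b' <= C * K). { pose proof (Hproj a' b' Ha' Hb'). rewrite <- Hy in H. pose proof (HmK N1). fold mm y in H0. nra. }
  set (x1 := iter B mm T a').
  assert (Hx : x = vadd x1 (iter B mm T b')).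
  { unfold x1. rewrite <- lin_add by apply HlT. rewrite <- Hy. unfold y. symmetry. apply iter_inv1; auto. }
  assert (Hd1 : Defs.dist B x x1 < eps / 2).
  { unfold Defs.dist. rewrite (sum_sub x x1 _ Hx). eapply Rle_lt_trans. apply Hcon1. auto.
    eapply Rle_lt_trans. 2: apply (HN1 mm Hmm). apply Rmult_le_compat_l. pose proof (pow_le t1 mm ltac:(lra)); nra. exact Hb'n. }
  assert (HTk : vnorm (iter B kk T x1) <= K2).
  { assert (iter B kk T x1 = vadd (iter B kk T x) (vopp (iter B (kk + mm) T b'))).
    { rewrite iter_add, <- lin_sub by apply HlT. f_equal. rewrite Hx at 1. symmetry. apply sum_sub2. reflexivity. }
    rewrite H. eapply Rle_trans. apply norm_tri_sub. pose proof (HkK N2). fold kk in H0.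
    pose proof (Hcon1 (kk + mm)%nat b' Hb'). pose proof (pow_le t1 (kk + mm)).
    assert (t1 ^ (kk + mm) <= 1). { clear -Ht1. induction (kk+mm)%nat. simpl; lra. simpl. nra. }
    unfold K2. pose proof (vnorm_nonneg b'). specialize (H2 ltac:(lra)).
    assert (c1 * t1 ^ (kk+mm) * vnorm b' <= c1 * (C*K)). { rewrite Rmult_assoc. apply Rmult_le_compat_l. lra. nra. }
    lra. }
  destruct (proj2 Hcomp (iter B kk T x1)) as [a'' [b'' [Ha'' [Hb'' Hx1]]]].
  assert (Ha''n : vnorm a'' <= (C + 1) * K2).
  { pose proof (norm_first a'' b''). pose proof (Hproj a'' b'' Ha'' Hb''). rewrite <- Hx1 in H, H0. nra. }
  set (x2 := iter B kk Tinv b'').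
  assert (Hx1' : x1 = vadd (iter B kk Tinv a'') x2).
  { unfold x2. rewrite <- lin_add by apply HlTi. rewrite <- Hx1. symmetry. apply iter_inv2; auto. }
  assert (Hd2 : Defs.dist B x1 x2 < eps / 2).
  { unfold Defs.dist. rewrite (sum_sub2 x1 _ x2 Hx1'). eapply Rle_lt_trans. apply Hcon2. auto.
    eapply Rle_lt_trans. 2: apply (HN2 kk Hkk). apply Rmult_le_compat_l. pose proof (pow_le t2 kk ltac:(lra)); nra. exact Ha''n. }
  exists (mm + kk)%nat, x2. split.
  - split.
    + rewrite Nat.add_comm, iter_add. apply iter_inv_sub; auto.
      assert (iter B mm Tinv x2 = vadd a' (vopp (iter B mm Tinv (iter B kk Tinv a'')))).
      { rewrite <- (sum_sub x1 (iter B kk Tinv a'') x2 Hx1'). rewrite lin_sub by apply HlTi.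
        unfold x1. rewrite iter_inv2; auto. }
      rewrite H. apply sub_sub; auto. apply iter_inv_sub; auto. apply iter_inv_sub; auto.
    + rewrite iter_add. apply iter_inv_sub; auto. unfold x2. rewrite iter_inv1; auto.
  - pose proof (dist_tri x x1 x2). lra.
Qed.

Definition Uset {B : Banach} (T : B -> B) (Em Ep : B -> Prop) (j : nat) (y : B) : Prop :=
  Em y /\ Ep (iter B j T y).

Lemma U_dec {B : Banach} (T Tinv : B -> B) (Em Ep : B -> Prop) :
  is_aut B T Tinv -> generalized_hyperbolic_dec B T Tinv Em Ep ->
  forall j y, Uset T Em Ep (S j) y -> exists e u, E0 B T Em Ep e /\ Uset T Em Ep j u /\ y = vadd e (Tinv u).
Proof.
  intros Haut [HEm [HEp [Hcomp [HTp [HTm _]]]]] j y [Hy1 Hy2].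
  destruct (proj2 Hcomp (T y)) as [a [b [Ha [Hb Hab]]]].
  assert (HlT : bounded_linear B (iter B j T)) by (apply iter_lin; apply Haut).
  assert (HTi : bounded_linear B Tinv) by apply Haut.
  destruct Haut as [_ [_ [HTT HTiT]]].
  assert (Hy : y = vadd (Tinv a) (Tinv b)) by (rewrite <- lin_add by auto; rewrite <- Hab; auto).
  exists (Tinv b), a. split; [|split].
  - split. rewrite <- (sum_sub y (Tinv a) (Tinv b) Hy). apply sub_sub; auto. rewrite HTT. auto.
  - split; auto. rewrite <- (sum_sub2 (T y) a b Hab). rewrite lin_sub by auto.
    apply sub_sub; auto. rewrite <- iterS_r. auto. apply iter_inv_sub; auto.
  - rewrite Hy. apply vadd_comm.
Qed.

Lemma U_zero {B : Banach} (T Tinv : B -> B) (Em Ep : B -> Prop) :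
  generalized_hyperbolic_dec B T Tinv Em Ep -> forall y, Uset T Em Ep 0 y -> y = vzero.
Proof. intros [_ [_ [[Hc _] _]]] y [H1 H2]. apply Hc; auto. Qed.

Fixpoint ev {B : Banach} (Tinv : B -> B) (d : nat -> B) (j : nat) (p : nat) : B :=
  match j with
  | O => vzero
  | S j => vadd (d (fst (Cantor.of_nat p))) (Tinv (ev Tinv d j (snd (Cantor.of_nat p))))
  end.

Lemma ev_S {B : Banach} (Tinv : B -> B) d j p :
  ev Tinv d (S j) p = vadd (d (fst (Cantor.of_nat p))) (Tinv (ev Tinv d j (snd (Cantor.of_nat p)))).
Proof. reflexivity. Qed.

Lemma U_approx {B : Banach} (T Tinv : B -> B) (Em Ep : B -> Prop) (d : nat -> B) :
  is_aut B T Tinv -> generalized_hyperbolic_dec B T Tinv Em Ep ->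
  (forall x, E0 B T Em Ep x -> forall eps, 0 < eps -> exists n, Defs.dist B x (d n) < eps) ->
  forall j y, Uset T Em Ep j y -> forall eps, 0 < eps -> exists p, Defs.dist B y (ev Tinv d j p) < eps.
Proof.
  intros Haut Hgh Hd j. destruct (lin_lip Tinv (proj1 (proj2 Haut))) as [L [HL HLip]].
  induction j; intros y Hy eps He.
  - exists 0%nat. rewrite (U_zero T Tinv Em Ep Hgh y Hy). simpl. rewrite dist_self. auto.
  - destruct (U_dec T Tinv Em Ep Haut Hgh j y Hy) as [e [u [He0 [Hu ->]]]].
    destruct (Hd e He0 (eps/2)) as [i Hi]. lra.
    destruct (IHj u Hu (eps / (2 * L))) as [q Hq]. apply Rdiv_lt_0_compat; lra.
    exists (Cantor.to_nat (i, q)). rewrite ev_S, Cantor.cancel_of_to. simpl.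
    unfold Defs.dist in *. rewrite sub_add2. eapply Rle_lt_trans. apply vnorm_triangle.
    specialize (HLip u (ev Tinv d j q)). unfold Defs.dist in HLip.
    assert (L * vnorm (vadd u (vopp (ev Tinv d j q))) <= L * (eps / (2 * L))) by (apply Rmult_le_compat_l; lra).
    assert (L * (eps / (2 * L)) = eps / 2) by (field; lra). lra.
Qed.

Definition gseq {B : Banach} (T Tinv : B -> B) (d : nat -> B) (p : nat) : B :=
  iter B (fst (Cantor.of_nat p)) T (ev Tinv d (fst (Cantor.of_nat p) + fst (Cantor.of_nat p)) (snd (Cantor.of_nat p))).

Lemma W_approx {B : Banach} (T Tinv : B -> B) (Em Ep : B -> Prop) (d : nat -> B) :
  is_aut B T Tinv -> generalized_hyperbolic_dec B T Tinv Em Ep ->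
  (forall x, E0 B T Em Ep x -> forall eps, 0 < eps -> exists n, Defs.dist B x (d n) < eps) ->
  forall n w, Wset T Tinv Em Ep n w -> forall eps, 0 < eps -> exists p, Defs.dist B w (gseq T Tinv d p) < eps.
Proof.
  intros Haut Hgh Hd n w [Hw1 Hw2] eps He.
  destruct (lin_lip (iter B n T) (iter_lin n T (proj1 Haut))) as [L [HL HLip]].
  assert (HU : Uset T Em Ep (n + n) (iter B n Tinv w)).
  { split; auto. rewrite iter_add, (iter_inv1 n T Tinv w Haut). auto. }
  destruct (U_approx T Tinv Em Ep d Haut Hgh Hd (n + n)%nat _ HU (eps / L)) as [q Hq].
  apply Rdiv_lt_0_compat; lra.
  exists (Cantor.to_nat (n, q)). unfold gseq. rewrite Cantor.cancel_of_to. simpl.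
  rewrite <- (iter_inv1 n T Tinv w Haut) at 1. eapply Rle_lt_trans. apply HLip.
  apply Rmult_lt_reg_l with (/ L). apply Rinv_0_lt_compat; lra.
  rewrite <- Rmult_assoc, Rinv_l, Rmult_1_l by lra. replace (/ L * eps) with (eps / L) by (field; lra). exact Hq.
Qed.

Lemma sep_from {B : Banach} (A : B -> Prop) (x0 : B) (g : nat -> B) :
  A x0 -> (forall x, A x -> forall eps, 0 < eps -> exists p, Defs.dist B x (g p) < eps) -> separable B A.
Proof.
  intros H0 Hg.
  assert (Hch : forall p k : nat, exists y, A y /\ ((exists y', A y' /\ Defs.dist B y' (g p) < / INR (S k)) -> Defs.dist B y (g p) < / INR (S k))).
  { intros p k. destruct (classic (exists y', A y' /\ Defs.dist B y' (g p) < / INR (S k))) as [[y' [H1 H2]]|Hn].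
    exists y'. auto. exists x0. split; auto. intro; contradiction. }
  exists (fun r => proj1_sig (constructive_indefinite_description _ (Hch (fst (Cantor.of_nat r)) (snd (Cantor.of_nat r))))).
  split. intro r. apply (proj2_sig (constructive_indefinite_description _ (Hch (fst (Cantor.of_nat r)) (snd (Cantor.of_nat r))))).
  intros x Hx eps He.
  destruct (INR_unbounded (2 / eps)) as [k Hk].
  assert (HSk : 0 < INR (S k)) by (apply lt_0_INR; lia).
  assert (Hk' : 2 / INR (S k) < eps).
  { rewrite S_INR. pose proof (pos_INR k). apply Rmult_lt_reg_r with (INR k + 1). lra.
    unfold Rdiv. rewrite Rmult_assoc, Rinv_l, Rmult_1_r by lra.
    apply Rmult_lt_reg_l with (/ eps). apply Rinv_0_lt_compat; lra.
    rewrite <- Rmult_assoc, Rinv_l, Rmult_1_l by lra. unfold Rdiv in Hk. lra. }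
  destruct (Hg x Hx (/ INR (S k))) as [p Hp]. apply Rinv_0_lt_compat; lra.
  exists (Cantor.to_nat (p, k)).
  destruct (proj2_sig (constructive_indefinite_description _ (Hch (fst (Cantor.of_nat (Cantor.to_nat (p, k)))) (snd (Cantor.of_nat (Cantor.to_nat (p, k))))))) as [_ Hy].
  set (yy := proj1_sig _) in *. rewrite Cantor.cancel_of_to in Hy. cbn [fst snd] in Hy.
  specialize (Hy (ex_intro _ x (conj Hx Hp))).
  pose proof (dist_tri x (g p) yy). rewrite (dist_sym (g p) yy) in H.
  unfold Rdiv in Hk'. lra.
Qed.

Theorem mainTheorem20 (B : Banach) (T Tinv : B -> B) (Em Ep : B -> Prop) :
  is_aut B T Tinv ->
  shifted_hyperbolic_dec B T Tinv Em Ep ->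
  separable B (E0 B T Em Ep) ->
  separable B (closure B (BT B T Tinv)).
Proof.
  intros Haut [Hgh _] [d [_ Hd]].
  apply (sep_from _ vzero (gseq T Tinv d)).
  - intros eps He. exists vzero. split. 2: rewrite dist_self; auto.
    exists 1, S, S. split. lra. split. intro; lia. split. intro; lia.
    split; intro n. rewrite (lin0 _ (iter_lin _ _ (proj1 Haut))), norm0; lra. rewrite (lin0 _ (iter_lin _ _ (proj1 (proj2 Haut)))), norm0; lra.
  - intros x Hx eps He.
    destruct (Hx (eps/3)) as [b [Hb Hxb]]. lra.
    destruct (bt_approx T Tinv Em Ep Haut Hgh b Hb (eps/3)) as [n [w [Hw Hbw]]]. lra.
    destruct (W_approx T Tinv Em Ep d Haut Hgh Hd n w Hw (eps/3)) as [p Hp]. lra.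
    exists p. pose proof (dist_tri x b w). pose proof (dist_tri x w (gseq T Tinv d p)). lra.
Qed.
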